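(* Suppose the collective choice problem $\mathcal C$ satisfies Generic Finite Alternatives and the generalized amendment procedure is rich. For any game with at least $|X|-1$ rounds, the agenda setter obtains her favorite policy in every equilibrium regardless of the initial default if and only if $\mathcal C$ is $\mathcal D$-Manipulable.
   Context: Voters $N=\{1,\dots,n\}$ and a non-voting agenda setter $A$ choose from a finite policy space $X$; each player has a strict (antisymmetric), complete, transitive preference $\succsim_i$ with utility $u_i$ (Generic Finite Alternatives). A voting rule is any collection $\mathcal D\subseteq 2^N$ of winning coalitions; a proposal passes iff all voters in some $D\in\mathcal D$ approve it. $\mathcal C$ is $\mathcal D$-Manipulable if for every policy $x$ other than the agenda setter's favorite there exist $y$ and $D\in\mathcal D$ with $y\succ_A x$ and $y\succ_i x$ for all $i\in D$. Generalized amendment procedure with $T$ rounds: initial default $x^0$; in round $t$ the agenda setter proposes $(a^t,i)$ from a feasible set $X(h)\subseteq X\times\{0,1\}$ that may depend on the history $h$; if it passes and $i=0$, $a^t$ becomes the next default; if it passes and $i=1$, deliberation ends and $a^t$ is implemented; if rejected, the default is unchanged; absent adjournment the default after round $T$ is implemented. Rich: at every history $h$, $X(h)\subseteq X\times\{0\}$ or $X(h)\subseteq X\times\{1\}$. Equilibrium: subgame perfect equilibrium with as-if-pivotal voting. *)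

(* Defs.v *)
From mathcomp Require Import all_boot.
Set Implicit Arguments. Unset Strict Implicit. Unset Printing Implicit Defensive.

(* A round: proposal (a, i) with i = true meaning "adjourn" (i = 1) and
   i = false meaning "amend" (i = 0), together with whether it passed. *)
Definition round (X : Type) := ((X * bool) * bool)%type.
Definition hist (X : Type) := seq (round X).

Definition ended (X : Type) (h : hist X) : bool :=
  has (fun r : round X => r.1.2 && r.2) h.

Fixpoint settle (X : Type) (d : X) (h : hist X) : X :=
  match h with
  | [::] => d
  | r :: h' => if r.2 then (if r.1.2 then r.1.1 else settle r.1.1 h')
               else settle d h'
  end.

Definition passes (n : nat) (D : {set {set 'I_n}}) (v : 'I_n -> bool) : bool :=
  [exists S in D, [forall i in S, v i]].

Record profile (n : nat) (X : Type) := Profile {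
  setter : hist X -> X * bool;
  vote : 'I_n -> hist X -> X * bool -> bool }.

Fixpoint play (n : nat) (X : Type) (D : {set {set 'I_n}}) (x0 : X)
    (s : profile n X) (k : nat) (h : hist X) : X :=
  match k with
  | 0 => settle x0 h
  | k'.+1 => if ended h then settle x0 h else
      let p := setter s h in
      play D x0 s k' (rcons h (p, passes D (fun i => vote s i h p)))
  end.

Definition outcome (n : nat) (X : Type) (D : {set {set 'I_n}}) (T : nat)
    (x0 : X) (s : profile n X) (h : hist X) : X :=
  play D x0 s (T - size h) h.

Definition valid (X : finType) (feas : hist X -> {set X * bool}) (h : hist X) : Prop :=
  forall (h1 : hist X) (r : round X) (h2 : hist X),
    h = h1 ++ r :: h2 -> r.1 \in feas h1.

Definition node (X : finType) (feas : hist X -> {set X * bool}) (T : nat)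
    (h : hist X) : Prop :=
  valid feas h /\ size h < T /\ ~~ ended h.

Definition feasible_setter (X : finType) (feas : hist X -> {set X * bool})
    (T : nat) (sA : hist X -> X * bool) : Prop :=
  forall h, node feas T h -> sA h \in feas h.

Definition with_setter (n : nat) (X : Type) (s : profile n X)
    (sA : hist X -> X * bool) : profile n X := Profile sA (vote s).

Definition with_voter (n : nat) (X : Type) (s : profile n X) (i : 'I_n)
    (vi : hist X -> X * bool -> bool) : profile n X :=
  Profile (setter s) (fun j => if j == i then vi else vote s j).

Definition vote_outcome (n : nat) (X : Type) (D : {set {set 'I_n}}) (T : nat)
    (x0 : X) (s : profile n X) (h : hist X) (p : X * bool) : X :=
  outcome D T x0 s (rcons h (p, passes D (fun j => vote s j h p))).

(* Subgame perfect equilibrium with as-if-pivotal voting. *)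
Definition equilibrium (n : nat) (X : finType) (uA : X -> nat)
    (u : 'I_n -> X -> nat) (D : {set {set 'I_n}})
    (feas : hist X -> {set X * bool}) (T : nat) (x0 : X) (s : profile n X) : Prop :=
  [/\ feasible_setter feas T (setter s),
      (forall h, node feas T h -> forall sA', feasible_setter feas T sA' ->
         uA (outcome D T x0 (with_setter s sA') h) <= uA (outcome D T x0 s h)),
      (forall h p, node feas T h -> p \in feas h -> forall i vi,
         u i (vote_outcome D T x0 (with_voter s i vi) h p)
           <= u i (vote_outcome D T x0 s h p))
    & (* as-if-pivotal voting at every voting node *)
      (forall h p, node feas T h -> p \in feas h -> forall i,
         let yes := u i (outcome D T x0 s (rcons h (p, true))) in
         let no := u i (outcome D T x0 s (rcons h (p, false))) in
         (no < yes -> vote s i h p) /\ (yes < no -> ~~ vote s i h p))].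

(* Generic Finite Alternatives: strict (antisymmetric) preferences,
   represented by injective utilities. *)
Definition GFA (n : nat) (X : finType) (uA : X -> nat) (u : 'I_n -> X -> nat) : Prop :=
  injective uA /\ forall i, injective (u i).

Definition rich (X : finType) (feas : hist X -> {set X * bool}) : Prop :=
  forall h, (forall x, (x, false) \in feas h) \/ (forall x, (x, true) \in feas h).

Definition favorite (X : finType) (uA : X -> nat) (x : X) : Prop :=
  forall y, uA y <= uA x.

Definition manipulable (n : nat) (X : finType) (uA : X -> nat)
    (u : 'I_n -> X -> nat) (D : {set {set 'I_n}}) : Prop :=
  forall x, ~ favorite uA x ->
    exists y, exists2 S, S \in D & uA x < uA y /\ (forall i, i \in S -> u i x < u i y).

(* Main.v *)
Require Import Defs.
From mathcomp Require Import all_boot.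
Set Implicit Arguments. Unset Strict Implicit. Unset Printing Implicit Defensive.

Definition Cpref (n : nat) (X : finType) (u : 'I_n -> X -> nat)
  (D : {set {set 'I_n}}) (y x : X) : bool :=
  [exists S in D, [forall i in S, u i x < u i y]].

Definition gstep (n : nat) (X : finType) (uA : X -> nat) (u : 'I_n -> X -> nat)
  (D : {set {set 'I_n}}) (x : X) : X :=
  [arg max_(y > x | (y == x) || Cpref u D y x) uA y].

Lemma g_ge n (X : finType) uA u D (x : X) : uA x <= uA (@gstep n X uA u D x).
Proof.
rewrite /gstep; case: arg_maxnP => [|y _ Hy]; first by rewrite eqxx.
by apply: Hy; rewrite eqxx.
Qed.

Lemma g_ub n (X : finType) uA u D (x y : X) : Cpref u D y x -> uA y <= uA (@gstep n X uA u D x).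
Proof.
move=> H; rewrite /gstep; case: arg_maxnP => [|z _ Hz]; first by rewrite eqxx.
by apply: Hz; rewrite H orbT.
Qed.

Lemma g_spec n (X : finType) uA u D (x : X) :
  @gstep n X uA u D x = x \/ Cpref u D (gstep uA u D x) x.
Proof.
rewrite /gstep; case: arg_maxnP => [|z /orP [/eqP ->|H] _]; first by rewrite eqxx.
 by left. by right.
Qed.

Lemma ended_rcons (X : Type) (h : hist X) r : ended (rcons h r) = (r.1.2 && r.2) || ended h.
Proof. by rewrite /ended has_rcons. Qed.

Lemma settle_rcons (X : Type) (h : hist X) r d : ~~ ended h ->
  settle d (rcons h r) = if r.2 then r.1.1 else settle d h.
Proof.
elim: h d => [|a h IH] d /=.
  by case: r => [[x b] c] /=; case: c; case: b.
rewrite /ended /= negb_or => /andP [Ha Hh].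
case: a Ha => [[x b] c] /= Ha.
case: c Ha => /= Ha; last by rewrite IH.
by case: b Ha => //= _; rewrite IH.
Qed.

Lemma settle_rcons_ended (X : Type) (h : hist X) r d : ended h ->
  settle d (rcons h r) = settle d h.
Proof.
elim: h d => [|a h IH] d //=.
rewrite /ended /=; case: a => [[x b] c] /=.
case: c => /=; case: b => //= H; by rewrite IH.
Qed.

Lemma play_ended n (X : Type) D (x0 : X) s k (h : hist X) : ended h ->
  @play n X D x0 s k h = settle x0 h.
Proof. by case: k => //= k ->. Qed.

Lemma outcome_step n (X : Type) D T (x0 : X) s (h : hist X) :
  size h < T -> ~~ ended h ->
  @outcome n X D T x0 s h =
  outcome D T x0 s (rcons h (setter s h, passes D (fun i => vote s i h (setter s h)))).
Proof.
move=> Hs He; rewrite /outcome size_rcons -(subnSK Hs) /=.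
by rewrite (negbTE He).
Qed.

Lemma outcome_end n (X : Type) D T (x0 : X) s (h : hist X) :
  T <= size h \/ ended h -> @outcome n X D T x0 s h = settle x0 h.
Proof.
rewrite /outcome => [[H|H]]; last by rewrite play_ended.
by have -> : T - size h = 0 by apply/eqP; rewrite subn_eq0.
Qed.

Definition Fv (n : nat) (X : finType) (uA : X -> nat) (u : 'I_n -> X -> nat)
  (D : {set {set 'I_n}}) (T : nat) (x0 : X) (h : hist X) : X :=
  if ended h then settle x0 h else iter (T - size h) (gstep uA u D) (settle x0 h).

Lemma F_node n (X : finType) uA u D T (x0 : X) h : size h < T -> ~~ ended h ->
  @Fv n X uA u D T x0 h = gstep uA u D (iter (T - size h).-1 (gstep uA u D) (settle x0 h)).
Proof.
move=> Hs He; rewrite /Fv (negbTE He).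
by rewrite -{1}(prednK (_ : 0 < T - size h)) ?subn_gt0.
Qed.

Lemma F_false n (X : finType) uA u D T (x0 : X) h p : ~~ ended h ->
  @Fv n X uA u D T x0 (rcons h (p, false)) = iter (T - size h).-1 (gstep uA u D) (settle x0 h).
Proof.
move=> He; rewrite /Fv ended_rcons (negbTE He) andbF /= settle_rcons //.
by rewrite size_rcons subnS.
Qed.

Lemma F_true n (X : finType) uA u D T (x0 : X) h p : ~~ ended h ->
  @Fv n X uA u D T x0 (rcons h (p, true)) =
  if p.2 then p.1 else iter (T - size h).-1 (gstep uA u D) p.1.
Proof.
move=> He; rewrite /Fv ended_rcons (negbTE He) andbT orbF settle_rcons //=.
by case: p.2 => //; rewrite size_rcons subnS.
Qed.

Lemma valid_nil (X : finType) (feas : hist X -> {set X * bool}) : valid feas [::].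
Proof. by move=> h1 r h2; case: h1. Qed.

Lemma valid_rcons (X : finType) (feas : hist X -> {set X * bool}) h p b :
  valid feas h -> p \in feas h -> valid feas (rcons h (p, b)).
Proof.
move=> Hv Hp h1 r h2; case/lastP: h2 => [|h2 x].
  rewrite cats1 => /rcons_inj [E1 E2]; by rewrite -E1 -E2.
rewrite -rcons_cons -rcons_cat => /rcons_inj [E _]; exact: Hv E.
Qed.

Lemma play_agree n (X : Type) D (x0 : X) s sA' k (h : hist X) :
  (forall h', size h <= size h' -> sA' h' = setter s h') ->
  play D x0 (with_setter s sA') k h = @play n X D x0 s k h.
Proof.
elim: k h => [|k IH] h Hag //=; case: ended => //.
rewrite Hag // IH // => h' Hh'; apply: Hag; rewrite size_rcons in Hh'; exact: ltnW.
Qed.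

Lemma eq_outcome n (X : finType) uA u D feas T (x0 : X) (s : profile n X) :
  injective uA -> (forall i, injective (u i)) -> rich feas ->
  equilibrium uA u D feas T x0 s ->
  forall h, valid feas h -> outcome D T x0 s h = Fv uA u D T x0 h.
Proof.
move=> injA injU Hrich [H1 H2 H3 H4].
suff: forall k h, T - size h = k -> valid feas h -> outcome D T x0 s h = Fv uA u D T x0 h.
  by move=> H h; apply: H.
set g := gstep uA u D.
elim=> [|k IH] h Hk Hv.
  rewrite outcome_end; last by left; rewrite -subn_eq0 Hk.
  by rewrite /Fv Hk; case: ended.
case He: (ended h).
  by rewrite outcome_end ?He //; [rewrite /Fv He | right].
have Hs : size h < T by rewrite -subn_gt0 Hk.
have Hnode : node feas T h by split => //; rewrite He.
move/negbT: He => He.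
set d := settle x0 h.
have Hkk : (T - size h).-1 = k by rewrite Hk.
set e := iter k g d.
have HF : Fv uA u D T x0 h = g e by rewrite F_node // Hkk.
have Hout : forall p b, p \in feas h ->
    outcome D T x0 s (rcons h (p, b)) = Fv uA u D T x0 (rcons h (p, b)).
  move=> p b Hp; apply: IH; last exact: valid_rcons.
  by rewrite size_rcons subnS Hk.
have Ff : forall p, Fv uA u D T x0 (rcons h (p, false)) = e.
  by move=> p; rewrite F_false // Hkk.
have Ft : forall p, Fv uA u D T x0 (rcons h (p, true)) = if p.2 then p.1 else iter k g p.1.
  by move=> p; rewrite F_true // Hkk.
have upper : forall p, p \in feas h ->
    uA (Fv uA u D T x0 (rcons h (p, passes D (fun i => vote s i h p)))) <= uA (g e).
  move=> p Hp; case Hb: (passes D _); last by rewrite Ff; exact: g_ge.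
  move: Hb => /existsP [S /andP [HS /forallP HSi]].
  set Y := Fv uA u D T x0 (rcons h (p, true)).
  case: (eqVneq Y e) => [->|HYe]; first exact: g_ge.
  apply: g_ub; apply/existsP; exists S; rewrite HS /=; apply/forallP => i.
  apply/implyP => Hi; have Hvi := implyP (HSi i) Hi.
  have [_ H4b] := H4 h p Hnode Hp i.
  rewrite /= !Hout // Ff in H4b.
  have Hle : u i e <= u i Y by rewrite leqNgt; apply/negP => /H4b; rewrite Hvi.
  rewrite ltn_neqAle Hle andbT; apply/negP => /eqP /injU E.
  by rewrite E eqxx in HYe.
have lower : forall p, p \in feas h -> Fv uA u D T x0 (rcons h (p, true)) = g e ->
    uA (g e) <= uA (outcome D T x0 s h).
  move=> p Hp HY.
  have Hval : Fv uA u D T x0 (rcons h (p, passes D (fun i => vote s i h p))) = g e.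
    move: (g_spec uA u D e); rewrite -/g => -[Hge|HC].
      by case: (passes D _); rewrite ?Ff ?HY Hge.
    suff -> : passes D (fun i => vote s i h p) by [].
    move: HC => /existsP [S /andP [HS /forallP HSi]].
    apply/existsP; exists S; rewrite HS /=; apply/forallP => i.
    apply/implyP => Hi; have Hvi := implyP (HSi i) Hi.
    have [H4a _] := H4 h p Hnode Hp i.
    by apply: H4a; rewrite /= !Hout // Ff HY.
  set sA' := fun h' => if h' == h then p else setter s h'.
  have Hf' : feasible_setter feas T sA'.
    move=> h' Hn'; rewrite /sA'; case: eqP => [->|_]; [exact: Hp | exact: H1].
  have := H2 h Hnode sA' Hf'.
  rewrite (outcome_step _ _ _ Hs He) /=.
  have -> : sA' h = p by rewrite /sA' eqxx.
  rewrite /outcome play_agree; last first.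
    move=> h'; rewrite /sA'; case: eqP => // ->; by rewrite size_rcons ltnn.
  by rewrite -/(outcome D T x0 s _) Hout // Hval.
apply: injA; apply/eqP; rewrite HF eqn_leq; apply/andP; split.
  rewrite (outcome_step _ _ _ Hs He) Hout; last exact: H1.
  apply: upper; exact: H1.
case: (Hrich h) => Hf.
  apply: (lower (g d, false)) => //; rewrite Ft /=.
  by rewrite /e -iterSr.
by apply: (lower (g e, true)) => //; rewrite Ft.
Qed.

Definition adjb (X : finType) (feas : hist X -> {set X * bool}) h : bool :=
  [forall x, (x, true) \in feas h].

Definition s0 (n : nat) (X : finType) (uA : X -> nat) (u : 'I_n -> X -> nat)
  (D : {set {set 'I_n}}) (feas : hist X -> {set X * bool}) (T : nat) (x0 : X) : profile n X :=
  @Profile n X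
    (fun h => if adjb feas h
              then (gstep uA u D (iter (T - size h).-1 (gstep uA u D) (settle x0 h)), true)
              else (gstep uA u D (settle x0 h), false))
    (fun i h p => u i (Fv uA u D T x0 (rcons h (p, false))) <
                  u i (Fv uA u D T x0 (rcons h (p, true)))).

Lemma passes_mono n D (v w : 'I_n -> bool) : (forall j, v j -> w j) -> passes D v -> passes D w.
Proof.
move=> Hvw /existsP [S /andP [HS /forallP HSi]]; apply/existsP; exists S.
rewrite HS /=; apply/forallP => j; apply/implyP => Hj; apply: Hvw.
exact: (implyP (HSi j)).
Qed.

Lemma rounds_ind (X : Type) T (P : hist X -> Prop) :
  (forall h, T <= size h \/ ended h -> P h) ->
  (forall h, size h < T -> ~~ ended h -> (forall r, P (rcons h r)) -> P h) ->
  forall h, P h.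
Proof.
move=> Hb Hs.
suff: forall k h, T - size h = k -> P h by move=> H h; exact: H.
elim=> [|k IH] h Hk.
  by apply: Hb; left; rewrite -subn_eq0 Hk.
case He: (ended h); first by apply: Hb; right.
apply: Hs; first by rewrite -subn_gt0 Hk.
  by rewrite He.
by move=> r; apply: IH; rewrite size_rcons subnS Hk.
Qed.

Lemma Fv_end n (X : finType) uA u D T (x0 : X) h : T <= size h \/ ended h ->
  @Fv n X uA u D T x0 h = settle x0 h.
Proof.
rewrite /Fv; case: ended => // [[H|//]].
by have -> : T - size h = 0 by apply/eqP; rewrite subn_eq0.
Qed.


Lemma s0_val n (X : finType) uA u D feas T (x0 : X) h p :
  size h < T -> ~~ ended h ->
  Fv uA u D T x0 (rcons h (p, true)) = gstep uA u D (iter (T - size h).-1 (gstep uA u D) (settle x0 h)) ->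
  Fv uA u D T x0 (rcons h (p, passes D (fun i => vote (@s0 n X uA u D feas T x0) i h p))) =
  Fv uA u D T x0 h.
Proof.
move=> Hs He HY; rewrite [Fv _ _ _ _ _ h]F_node //.
set e := iter _ _ _ in HY *.
have Ff : Fv uA u D T x0 (rcons h (p, false)) = e by rewrite F_false.
move: (g_spec uA u D e) => -[Hge|HC].
  by case: (passes D _); rewrite ?Ff ?HY Hge.
suff -> : passes D (fun i => vote (s0 uA u D feas T x0) i h p) by [].
move: HC => /existsP [S /andP [HS /forallP HSi]].
apply/existsP; exists S; rewrite HS /=; apply/forallP => i.
by rewrite Ff HY; exact: (HSi i).
Qed.

Lemma s0_outcome n (X : finType) uA u D feas T (x0 : X) h :
  outcome D T x0 (@s0 n X uA u D feas T x0) h = Fv uA u D T x0 h.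
Proof.
move: h; apply: (@rounds_ind X T) => [h Hh|h Hs He IH].
  by rewrite outcome_end // Fv_end.
rewrite outcome_step // IH; apply: s0_val => //.
rewrite F_true // /=; case: (adjb feas h) => //=.
by rewrite -iterSr.
Qed.

Lemma s0_setter_dev n (X : finType) uA u D feas T (x0 : X) sA' h :
  uA (outcome D T x0 (with_setter (@s0 n X uA u D feas T x0) sA') h) <= uA (Fv uA u D T x0 h).
Proof.
move: h; apply: (@rounds_ind X T) => [h Hh|h Hs He IH].
  by rewrite outcome_end // Fv_end.
rewrite outcome_step //; apply: leq_trans (IH _) _.
rewrite /= [Fv _ _ _ _ _ h]F_node //.
set e := iter _ _ _.
have Ff : forall p, Fv uA u D T x0 (rcons h (p, false)) = e by move=> p; rewrite F_false.
case Hb: (passes D _); last by rewrite Ff; exact: g_ge.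
apply: g_ub; move: Hb => /existsP [S /andP [HS /forallP HSi]].
apply/existsP; exists S; rewrite HS /=; apply/forallP => i.
by move: (HSi i); rewrite Ff.
Qed.

Lemma s0_pivot n (X : finType) uA u D feas T (x0 : X) i vi h p :
  u i (Fv uA u D T x0 (rcons h (p, passes D (fun j => vote (with_voter (@s0 n X uA u D feas T x0) i vi) j h p))))
  <= u i (Fv uA u D T x0 (rcons h (p, passes D (fun j => vote (@s0 n X uA u D feas T x0) j h p)))).
Proof.
set s := @s0 n X uA u D feas T x0 => /=.
set v := fun j => vote s j h p.
set v' := fun j => (if j == i then vi else vote s j) h p.
case Hvi: (vote s i h p).
  have Hm : forall j, v' j -> v j.
    by move=> j; rewrite /v' /v; case: eqP => [->|_] //; rewrite Hvi.
  case Hb': (passes D v'); first by rewrite (passes_mono Hm Hb').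
  case Hb: (passes D v) => //; exact: ltnW.
have Hm : forall j, v j -> v' j.
  by move=> j; rewrite /v' /v; case: eqP => [->|_] //; rewrite Hvi.
case Hb: (passes D v); first by rewrite (passes_mono Hm Hb).
case Hb': (passes D v') => //.
by move: Hvi => /= /negbT; rewrite -leqNgt.
Qed.

Lemma s0_voter_dev n (X : finType) uA u D feas T (x0 : X) i vi h :
  u i (outcome D T x0 (with_voter (@s0 n X uA u D feas T x0) i vi) h) <= u i (Fv uA u D T x0 h).
Proof.
move: h; apply: (@rounds_ind X T) => [h Hh|h Hs He IH].
  by rewrite outcome_end // Fv_end.
rewrite outcome_step //; apply: leq_trans (IH _) _.
rewrite -(s0_outcome uA u D feas T x0 h) (outcome_step _ _ _ Hs He) s0_outcome.
exact: s0_pivot.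
Qed.

Lemma s0_equilibrium n (X : finType) uA u D feas T (x0 : X) :
  rich feas -> equilibrium uA u D feas T x0 (@s0 n X uA u D feas T x0).
Proof.
move=> Hrich; split.
- move=> h _ /=; rewrite /adjb; case: ifP => [/forallP H|Hf]; first exact: H.
  case: (Hrich h) => // H; move/negP: Hf; case; apply/forallP => x; exact: H.
- move=> h _ sA' _; rewrite s0_outcome; exact: s0_setter_dev.
- move=> h p _ _ i vi; rewrite /vote_outcome s0_outcome.
  apply: leq_trans (s0_voter_dev _ _ _ _ _ _ _ _ _) _.
  exact: s0_pivot.
- move=> h p _ _ i /=; rewrite !s0_outcome; split => // H.
  by rewrite -leqNgt ltnW.
Qed.

Lemma iter_fix (X : Type) (f : X -> X) x k : f x = x -> iter k f x = x.
Proof. by move=> H; elim: k => //= k ->. Qed.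

Lemma fav_iter (X : finType) (uA : X -> nat) (f : X -> X) (x0 : X) T :
  (forall x, uA x <= uA (f x)) -> (forall x, ~ favorite uA x -> uA x < uA (f x)) ->
  #|X|.-1 <= T -> favorite uA (iter T f x0).
Proof.
move=> Hge Hst HT.
have key : forall j, favorite uA (iter j f x0) \/
    j.+1 <= #|[set y | uA y <= uA (iter j f x0)]|.
  elim=> [|j IH].
    by right; apply/card_gt0P; exists x0; rewrite inE.
  have [/forallP Hf|Hnf] := boolP [forall y, uA y <= uA (iter j f x0)].
    by left => y /=; apply: leq_trans (Hf y) (Hge _).
  have Hnf' : ~ favorite uA (iter j f x0).
    by move=> Hf; case/negP: Hnf; apply/forallP => y; exact: Hf.
  case: IH => [//|IH]; right.
  apply: leq_ltn_trans IH (proper_card _).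
  apply/properP; split.
    by apply/subsetP => y; rewrite !inE /= => Hy; apply: leq_trans Hy (Hge _).
  exists (iter j.+1 f x0); first by rewrite inE.
  by rewrite inE -ltnNge /=; apply: Hst.
case: (key T) => [//|H] y.
have E : [set y | uA y <= uA (iter T f x0)] = setT.
  apply/eqP; rewrite eqEcard subsetT cardsT.
  apply: leq_trans (leqSpred _) _; apply: leq_trans _ H; by rewrite ltnS.
by have := in_setT y; rewrite -E inE.
Qed.

Theorem corollary1 (n : nat) (X : finType) (uA : X -> nat) (u : 'I_n -> X -> nat)
    (D : {set {set 'I_n}}) (feas : hist X -> {set X * bool}) (T : nat) :
  GFA uA u -> rich feas -> #|X|.-1 <= T ->
  ((forall (x0 : X) (s : profile n X), equilibrium uA u D feas T x0 s ->
      favorite uA (outcome D T x0 s [::]))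
   <-> manipulable uA u D).
Proof.
move=> [injA injU] Hrich HT; split.
- move=> H x Hnf.
  case: (boolP [exists y, (uA x < uA y) && Cpref u D y x]).
    move=> /existsP [y /andP [Hlt /existsP [S /andP [HS /forallP HSi]]]].
    exists y; exists S => //; split => // i Hi; exact: (implyP (HSi i) Hi).
  move=> Hno; exfalso; apply: Hnf.
  have Hgx : gstep uA u D x = x.
    case: (g_spec uA u D x) => // HC.
    case: (eqVneq (gstep uA u D x) x) => // Hne.
    case/negP: Hno; apply/existsP; exists (gstep uA u D x).
    rewrite HC andbT ltn_neqAle g_ge andbT.
    by apply/negP => /eqP /injA E; rewrite -E eqxx in Hne.
  have := H x (s0 uA u D feas T x) (@s0_equilibrium n X uA u D feas T x Hrich).
  by rewrite s0_outcome /Fv /= subn0 iter_fix.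
- move=> Hm x0 s Heq.
  rewrite (eq_outcome injA injU Hrich Heq (valid_nil feas)) /Fv /= subn0.
  apply: fav_iter => //; first exact: g_ge.
  move=> x Hnf; have [y [S HS [Hlt Hi]]] := Hm x Hnf.
  apply: (leq_trans Hlt); apply: g_ub; apply/existsP; exists S; rewrite HS /=.
  by apply/forallP => i; apply/implyP; exact: Hi.
Qed.
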